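(* Let $\kappa\ge2$ and let $\psi^+$ be a rooted caterpillar tree on $n\ge1$ taxa. Then the dimension of the $\mathrm{UE}_\kappa(\psi^+)$ model (i.e., of its affine closure) is $$d_\kappa(\psi^+)=\frac{\kappa^n+\kappa}{2}-1.$$
   Context: For a rooted binary topological tree $\psi^+$ on $X$, $d_\kappa(\psi^+)$ is the dimension of the affine space of real $|X|$-way $\kappa\times\cdots\times\kappa$ tensors $P$ (one index per taxon) whose entries sum to 1 and such that for every $Y\subseteq X$ and every 2-clade $\{a,b\}$ of the induced rooted subtree $\psi^+|_Y$, the marginalization $P_Y$ is invariant under exchanging the $a$ and $b$ indices. A 2-clade is a pair of leaves that are exactly the leaf descendants of some vertex. A rooted caterpillar on $n$ taxa is a rooted binary tree in which every internal vertex has at least one leaf child (i.e., of the form $(x_1,(x_2,(\dots,(x_{n-1},x_n))))$). *)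

(* Defs.v *)
From HB Require Import structures.
From mathcomp Require Import all_boot all_order all_algebra.
From mathcomp Require Import perm.
From mathcomp Require Import reals.
Set Implicit Arguments. Unset Strict Implicit. Unset Printing Implicit Defensive.
Import Order.TTheory GRing.Theory Num.Theory.
Local Open Scope ring_scope.

Inductive rtree (T : Type) : Type :=
| Leaf of T
| Node of rtree T & rtree T.
Arguments Leaf {T}.
Arguments Node {T}.

Fixpoint leaves (T : Type) (t : rtree T) : seq T :=
  match t with
  | Leaf x => [:: x]
  | Node l r => leaves l ++ leaves r
  end.

(** All subtrees (= all vertices, each viewed as the subtree it roots). *)
Fixpoint subtrees (T : Type) (t : rtree T) : seq (rtree T) :=
  match t with
  | Leaf x => [:: t]
  | Node l r => t :: (subtrees l ++ subtrees r)
  end.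

Definition tree_on (n : nat) (t : rtree 'I_n) : Prop :=
  perm_eq (leaves t) (enum 'I_n).

Definition is_leaf (T : Type) (t : rtree T) : bool :=
  if t is Leaf _ then true else false.

Fixpoint caterpillar (T : Type) (t : rtree T) : bool :=
  match t with
  | Leaf _ => true
  | Node l r => (is_leaf l || is_leaf r) && caterpillar l && caterpillar r
  end.

(** Induced rooted subtree on Y: delete leaves outside Y and suppress the
    resulting degree-two vertices ([None] when no leaf survives). *)
Fixpoint restrict (T : eqType) (Y : pred T) (t : rtree T) : option (rtree T) :=
  match t with
  | Leaf x => if Y x then Some (Leaf x) else None
  | Node l r =>
      match restrict Y l, restrict Y r with
      | Some l', Some r' => Some (Node l' r')
      | Some l', None => Some l'
      | None, Some r' => Some r'
      | None, None => None
      end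
  end.

Definition two_clade (T : eqType) (t : rtree T) (a b : T) : bool :=
  (a != b) && has (fun s => perm_eq (leaves s) [:: a; b]) (subtrees t).

(** Tensors: real entries indexed by assignments of a state in 'I_k to each
    taxon in 'I_n (i.e. n-way k x ... x k tensors). *)
Definition tensor (R : realType) (n k : nat) :=
  {ffun {ffun 'I_n -> 'I_k} -> R^o}.

(** Marginalization onto Y, evaluated at (the restriction to Y of) sigma. *)
Definition marg (R : realType) (n k : nat) (P : tensor R n k)
  (Y : {set 'I_n}) (sigma : {ffun 'I_n -> 'I_k}) : R :=
  \sum_(tau : {ffun 'I_n -> 'I_k} | [forall i in Y, tau i == sigma i]) P tau.

Definition swap_idx (n k : nat) (a b : 'I_n) (sigma : {ffun 'I_n -> 'I_k})
  : {ffun 'I_n -> 'I_k} := [ffun i => sigma (tperm a b i)].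

Definition UE_set (R : realType) (n k : nat) (t : rtree 'I_n)
  (P : tensor R n k) : Prop :=
  \sum_(sigma : {ffun 'I_n -> 'I_k}) P sigma = 1 /\
  forall (Y : {set 'I_n}) (t' : rtree 'I_n) (a b : 'I_n),
    restrict (mem Y) t = Some t' -> two_clade t' a b ->
    forall sigma, marg P Y sigma = marg P Y (swap_idx a b sigma).

Definition affine_dim (R : fieldType) (V : vectType R) (S : V -> Prop)
  (d : nat) : Prop :=
  (exists P, S P) /\
  exists U : {vspace V},
    [/\ \dim U = d,
        (forall P Q, S P -> S Q -> P - Q \in U) &
        (forall W : {vspace V},
            (forall P Q, S P -> S Q -> P - Q \in W) -> (U <= W)%VS)].

(* Main.v *)
Require Import Defs.
From HB Require Import structures.
From mathcomp Require Import all_boot all_order all_algebra.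
From mathcomp Require Import reals.
From mathcomp Require Import perm zify ring.
Set Implicit Arguments. Unset Strict Implicit. Unset Printing Implicit Defensive.
Import Order.TTheory GRing.Theory Num.Theory.
Local Open Scope ring_scope.

Section Trees.
Variable T : eqType.
Implicit Types t l r s : rtree T.

Lemma size_leaves t : (0 < size (leaves t))%N.
Proof. elim: t => [x|l IHl r _] //=; rewrite size_cat; lia. Qed.

Lemma restrict_leaves (Y : pred T) t :
  (if restrict Y t is Some s then leaves s else [::]) = filter Y (leaves t).
Proof.
elim: t => [x|l IHl r IHr] /=; first by case: (Y x).
rewrite filter_cat -IHl -IHr.
by case: (restrict Y l) => [l'|]; case: (restrict Y r) => [r'|] //=; rewrite cats0.
Qed.

Lemma restrict_eq_in (Y Y' : pred T) t :
  {in leaves t, Y =1 Y'} -> restrict Y t = restrict Y' t.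
Proof.
elim: t => [x|l IHl r IHr] /= H; first by rewrite H // mem_seq1.
rewrite IHl ?IHr // => i Hi; apply: H; by rewrite mem_cat Hi ?orbT.
Qed.

Lemma leaves1 s y : leaves s = [:: y] -> s = Leaf y.
Proof.
case: s => [x [->]//|l r /= /(congr1 size)]; rewrite size_cat /=.
have:=size_leaves l; have:=size_leaves r; lia.
Qed.

Lemma subtrees_has (p : pred (rtree T)) t : has p (subtrees t) ->
  exists2 s, p s & {subset leaves s <= leaves t}.
Proof.
elim: t => [x|l IHl r IHr] /=; first by rewrite orbF => ps; exists (Leaf x).
case/orP => [ps|]; first by exists (Node l r).
rewrite has_cat => /orP[/IHl|/IHr] [s ps sub]; exists s => // i /sub;
by rewrite mem_cat => ->; rewrite ?orbT.
Qed.

Lemma subtrees_self (p : pred (rtree T)) t : p t -> has p (subtrees t).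
Proof. by case: t => [x|l r] /= ->. Qed.

Lemma two_clade_mem t a b : two_clade t a b -> (a \in leaves t) && (b \in leaves t).
Proof.
case/andP => _ /subtrees_has [s Hp sub].
by rewrite !sub // (perm_mem Hp) !inE eqxx ?orbT.
Qed.

Lemma two_clade_swap l r a b : two_clade (Node l r) a b = two_clade (Node r l) a b.
Proof.
rewrite /two_clade /= (perm_catC (leaves l)) !has_cat; congr (_ && (_ || _)).
exact: orbC.
Qed.

Definition consT (Y : pred T) t a b :=
  if restrict Y t is Some s then two_clade s a b else false.

Lemma consT_swap Y l r a b : consT Y (Node l r) a b = consT Y (Node r l) a b.
Proof.
rewrite /consT /=; case: (restrict Y l) => [l'|]; case: (restrict Y r) => [r'|] //.
exact: two_clade_swap.
Qed.

Lemma perm_size2 (s1 : seq T) a b : size s1 != 2%N -> perm_eq s1 [:: a; b] = false.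
Proof. by move=> /eqP H; apply/negbTE/negP => /perm_size. Qed.

Lemma consT_leaf Y x a b : consT Y (Leaf x) a b = false.
Proof.
rewrite /consT /=; case: (Y x) => //.
by rewrite /two_clade /= orbF perm_size2 ?andbF.
Qed.

Lemma consT_node Y x t' a b : consT Y (Node (Leaf x) t') a b =
  consT Y t' a b || (Y x && (if restrict Y t' is Some (Leaf y)
       then (a != b) && perm_eq [:: x; y] [:: a; b] else false)).
Proof.
rewrite /consT /=; case: (Y x) => /=; last first.
  by case: (restrict Y t') => [s|] //; rewrite orbF.
case: (restrict Y t') => [s|] /=; last by rewrite /two_clade /= orbF perm_size2 ?andbF.
rewrite /two_clade /= (perm_size2 (s1:=[:: x])) //=.
case: s => [y|l r] /=.
  by rewrite (perm_size2 (s1:=[:: y])) //= andbF /= orbF.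
rewrite perm_size2 /=; last by rewrite size_cat; have:=size_leaves l; have:=size_leaves r; lia.
by rewrite orbF.
Qed.

Lemma restrict_pair (Y : pred T) t y y0 :
  perm_eq (filter Y (leaves t)) [:: y; y0] -> y != y0 -> consT Y t y y0.
Proof.
move=> H yy; have := restrict_leaves Y t; rewrite /consT.
case: (restrict Y t) => [s|] Hs; last by move: H; rewrite -Hs => /perm_size.
by rewrite /two_clade yy /=; apply: subtrees_self; rewrite Hs.
Qed.

Lemma restrict_one (Y : pred T) t y : filter Y (leaves t) = [:: y] ->
  restrict Y t = Some (Leaf y).
Proof.
move=> H; have := restrict_leaves Y t; rewrite H.
by case: (restrict Y t) => [s|] // /leaves1 ->.
Qed.

Lemma consT_mem (Y : pred T) t a b : consT Y t a b ->
  [/\ Y a, Y b, a \in leaves t & b \in leaves t].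
Proof.
rewrite /consT; have := restrict_leaves Y t.
case: (restrict Y t) => [s|] // Hs /two_clade_mem /andP[].
by rewrite Hs !mem_filter => /andP[-> ->] /andP[-> ->].
Qed.

End Trees.

Section Tensors.
Variables (R : realType) (n k : nat) (z : 'I_k).
Local Notation F := {ffun 'I_n -> 'I_k}.
Local Notation V := (tensor R n k).
Implicit Types (s u v t r : F) (P Q : V) (Y X : {set 'I_n}) (x y a b : 'I_n) (c d e : 'I_k) (C : {set 'I_n} -> 'I_n -> 'I_n -> bool).

Definition agree (Y : {set 'I_n}) (t s : F) := [forall i in Y, t i == s i].

Lemma margE (P : V) Y s : marg P Y s = \sum_t (agree Y t s)%:R * P t.
Proof.
rewrite /marg big_mkcond; apply: eq_bigr => t _ /=; rewrite /agree.
by case: ifP; rewrite ?mul1r ?mul0r.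
Qed.

Definition margf (Y : {set 'I_n}) (s : F) (P : V) : R^o := marg P Y s.
Fact margf_lin Y s : linear (margf Y s).
Proof.
move=> a P Q; rewrite /margf !margE scaler_sumr -big_split /=.
apply: eq_bigr => t _; rewrite !ffunE mulrDr; congr (_ + _).
by rewrite /GRing.scale /= mulrCA.
Qed.
HB.instance Definition _ Y s := GRing.isLinear.Build R V R^o _ (margf Y s) (margf_lin Y s).

Lemma dimR : \dim (fullv : {vspace R^o}) = 1%N.
Proof. by rewrite dimvf. Qed.

Lemma dimffun (I : finType) : \dim (fullv : {vspace {ffun I -> R^o}}) = #|I|.
Proof. by rewrite dimvf /dim /= muln1. Qed.


Definition upd (x : 'I_n) (e : 'I_k) (s : F) : F := [ffun i => if i == x then e else s i].

Lemma updE x e s i : upd x e s i = if i == x then e else s i.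
Proof. by rewrite ffunE. Qed.

Lemma upd_id x e s : s x = e -> upd x e s = s.
Proof. by move=> H; apply/ffunP => i; rewrite updE; case: eqP => // ->. Qed.

Lemma upd_upd x c e s : upd x c (upd x e s) = upd x c s.
Proof. by apply/ffunP => i; rewrite !updE; case: eqP. Qed.

Lemma upd_at x e s : upd x e s x = e.
Proof. by rewrite updE eqxx. Qed.

Lemma swapE a b s i : swap_idx a b s i = s (tperm a b i).
Proof. by rewrite ffunE. Qed.

Lemma swapK a b s : swap_idx a b (swap_idx a b s) = s.
Proof. by apply/ffunP => i; rewrite !swapE tpermK. Qed.

Lemma swap_inj (a b : 'I_n) : injective (@swap_idx n k a b).
Proof. exact: can_inj (swapK a b). Qed.

Lemma swap_x a b x s : a != x -> b != x -> swap_idx a b s x = s x.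
Proof. by move=> ax bx; rewrite swapE tpermD. Qed.

Lemma upd_swap a b x c s : a != x -> b != x ->
  upd x c (swap_idx a b s) = swap_idx a b (upd x c s).
Proof.
move=> ax bx; apply/ffunP => i; rewrite updE !swapE updE.
case: (i =P x) => [->|ix]; first by rewrite tpermD ?eqxx.
suff -> : (tperm a b i == x) = false by [].
apply/negbTE/eqP => H; apply: ix; rewrite -(tpermK a b i) H tpermD //.
Qed.

Lemma sum_upd x (f : F -> R) :
  \sum_t f t = \sum_e \sum_(t : F | t x == z) f (upd x e t).
Proof.
rewrite (partition_big (fun t : F => fun_of_fin t x) xpredT) //=.
apply: eq_bigr => e _.
rewrite (reindex_onto (upd x e) (upd x z)) /=; last first.
  by move=> t /eqP H; rewrite upd_upd upd_id.
apply: eq_bigl => t; rewrite upd_at eqxx /= upd_upd.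
apply/eqP/eqP => [<-|H]; first by rewrite upd_at.
exact: upd_id.
Qed.

Lemma agree_sym Y u v : agree Y u v = agree Y v u.
Proof. by apply/forall_inP/forall_inP => H i /H; rewrite eq_sym. Qed.

Lemma marg_agree (P : V) Y s s' : agree Y s s' -> marg P Y s = marg P Y s'.
Proof.
move=> /forall_inP H; rewrite /marg; apply: eq_bigl => t.
by apply/forall_inP/forall_inP => H' i iY; rewrite (eqP (H' i iY)) ?(H i iY) // -(eqP (H i iY)).
Qed.

Definition delta (r : F) : V := [ffun t => (t == r)%:R].

Lemma marg_delta r Y s : marg (delta r) Y s = (agree Y r s)%:R.
Proof.
rewrite margE (bigD1 r) //= big1 ?addr0 => [|t tr]; rewrite ffunE ?eqxx ?mulr1 //.
by rewrite (negbTE tr) mulr0.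
Qed.

Lemma marg_sum_upd (P : V) x Y s : x \notin Y ->
  marg P Y s = \sum_e marg P (x |: Y) (upd x e s).
Proof.
move=> xY; under eq_bigr do rewrite margE.
rewrite exchange_big margE /=; apply: eq_bigr => t _; rewrite -mulr_suml.
congr (_ * _); rewrite (bigD1 (t x)) //= big1 ?addr0 => [|e et].
  congr ((nat_of_bool _)%:R); rewrite /agree; apply/idP/idP => /forall_inP H; apply/forall_inP => i.
    rewrite !inE => /orP[/eqP->|iY]; first by rewrite upd_at.
    rewrite updE; case: (i =P x) => [ix|_]; last exact: H.
    by rewrite -ix iY in xY.
  move=> iY; have := H i; rewrite !inE iY orbT updE => /(_ isT).
  by case: (i =P x) => // ix; rewrite -ix iY in xY.
case: (boolP (agree _ _ _)) => // /forall_inP /(_ x); rewrite !inE eqxx upd_at.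
by move=> /(_ isT) /eqP ex; rewrite ex eqxx in et.
Qed.


Lemma scaleRo (w : R) (b : R^o) : w *: b = w * b. Proof. by []. Qed.

Lemma margD (w : R) P Q Y s : marg (w *: P + Q) Y s = w * marg P Y s + marg Q Y s.
Proof. exact: (linearP (margf Y s) w P Q). Qed.

Lemma margB P Q Y s : marg (P - Q) Y s = marg P Y s - marg Q Y s.
Proof. exact: (linearB (margf Y s) P Q). Qed.

Lemma marg_sum (I : finType) (G : I -> V) Y s :
  marg (\sum_i G i) Y s = \sum_i marg (G i) Y s.
Proof. exact: (linear_sum (margf Y s)). Qed.

Lemma margZ (w : R) P Y s : marg (w *: P) Y s = w * marg P Y s.
Proof.
rewrite !margE mulr_sumr; apply: eq_bigr => t _; rewrite ffunE scaleRo; ring.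
Qed.

Lemma natr_andb (b1 b2 : bool) : ((b1 && b2)%:R : R) = b1%:R * b2%:R.
Proof. by case: b1; case: b2; rewrite ?mul1r ?mul0r. Qed.

Lemma agree_D1 x Y u v :
  agree Y u v = ((x \in Y) ==> (u x == v x)) && agree (Y :\ x) u v.
Proof.
rewrite /agree; apply/idP/idP => [/forall_inP H|/andP[/implyP H1 /forall_inP H2]].
  apply/andP; split; first by apply/implyP => /H.
  by apply/forall_inP => i; rewrite !inE => /andP[_ /H].
apply/forall_inP => i iY; case: (i =P x) => [ix|/eqP ix].
  by rewrite ix; apply: H1; rewrite -ix.
by apply: H2; rewrite !inE ix iY.
Qed.

Lemma agree_updn x c (A : {set 'I_n}) u v : x \notin A ->
  agree A (upd x c u) (upd x c v) = agree A u v.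
Proof.
move=> xA; rewrite /agree; apply/forall_inP/forall_inP => H i iA; have := H i iA;
by rewrite !updE; case: (i =P x) => // ix; rewrite -ix iA in xA.
Qed.

Lemma agree_upd2 x c Y u v :
  agree (x |: Y) (upd x c u) (upd x c v) = agree (Y :\ x) u v.
Proof.
rewrite (agree_D1 x) setU11 /= !upd_at eqxx /= agree_updn; last by rewrite !inE eqxx.
suff -> : (x |: Y) :\ x = Y :\ x by [].
by apply/setP => i; rewrite !inE; case: (i == x).
Qed.

Definition slice x c P : V := [ffun s : F => if s x == z then P (upd x c s) else 0].
Definition ins x c P : V := [ffun s : F => if s x == c then P (upd x z s) else 0].

Fact slice_lin x c : linear (slice x c).
Proof.
move=> a P Q; apply/ffunP => s; rewrite !ffunE; case: ifP => _; rewrite ?ffunE //.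
by rewrite scaler0 addr0.
Qed.
HB.instance Definition _ x c := GRing.isLinear.Build R V V _ (slice x c) (slice_lin x c).
Fact ins_lin x c : linear (ins x c).
Proof.
move=> a P Q; apply/ffunP => s; rewrite !ffunE; case: ifP => _; rewrite ?ffunE //.
by rewrite scaler0 addr0.
Qed.
HB.instance Definition _ x c := GRing.isLinear.Build R V V _ (ins x c) (ins_lin x c).

Lemma marg_slice x c P Y s : marg (slice x c P) Y s =
  (if x \in Y then (s x == z)%:R else 1) * marg P (x |: Y) (upd x c s).
Proof.
rewrite margE (sum_upd x) (bigD1 z) //= [X in _ + X = _]big1 ?addr0 => [|e ez]; last first.
  by apply: big1 => t _; rewrite ffunE upd_at (negbTE ez) mulr0.
rewrite margE (sum_upd x) (bigD1 c) //= [X in _ * (_ + X)]big1 ?addr0 => [|e ec]; last first.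
  apply: big1 => t _; suff -> : agree (x |: Y) (upd x e t) (upd x c s) = false by rewrite mul0r.
  apply/negbTE/forall_inP => /(_ x); rewrite setU11 !upd_at => /(_ isT) /eqP ee.
  by rewrite ee eqxx in ec.
rewrite mulr_sumr; apply: eq_bigr => t /eqP tx.
rewrite ffunE upd_at eqxx upd_upd (upd_id tx) mulrA; congr (_ * _).
rewrite (agree_D1 x Y t s) agree_upd2 natr_andb.
by case: (boolP (x \in Y)) => xY /=; rewrite ?mul1r // tx eq_sym.
Qed.

Definition inW (X : {set 'I_n}) P := forall s, [exists i in ~: X, s i != z] -> P s = 0.

Lemma inW_zero X P s i : inW X P -> i \notin X -> s i != z -> P s = 0.
Proof. by move=> H iX si; apply: H; apply/existsP; exists i; rewrite !inE iX. Qed.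

Lemma inW_nz X P t : inW X P -> P t != 0 -> forall i, i \notin X -> t i = z.
Proof.
move=> H Pt i iX; apply/eqP; apply: contraR Pt => ti.
by rewrite (inW_zero H iX ti).
Qed.

Lemma marg_W X P Y Y' s : inW X P -> Y :&: X = Y' :&: X ->
  (forall i, i \in Y :|: Y' -> i \notin X -> s i = z) -> marg P Y s = marg P Y' s.
Proof.
move=> HW YX Hs; rewrite !margE; apply: eq_bigr => t _.
case: (P t =P 0) => [->|/eqP Pt]; first by rewrite !mulr0.
have tz := inW_nz HW Pt; congr (_ * _); congr ((nat_of_bool _)%:R).
rewrite /agree; apply/forall_inP/forall_inP => H i iY.
  case: (boolP (i \in X)) => iX.
    have : i \in Y :&: X by rewrite YX inE iY iX.
    by rewrite inE => /andP[/H].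
  by rewrite tz // Hs // inE iY orbT.
case: (boolP (i \in X)) => iX.
  have : i \in Y' :&: X by rewrite -YX inE iY iX.
  by rewrite inE => /andP[/H].
by rewrite tz // Hs // inE iY.
Qed.

Lemma marg_W0 X P Y s i : inW X P -> i \in Y -> i \notin X -> s i != z ->
  marg P Y s = 0.
Proof.
move=> HW iY iX si; rewrite margE; apply: big1 => t _.
case: (boolP (agree Y t s)) => [/forall_inP /(_ i iY) /eqP ti|]; last by rewrite mul0r.
by rewrite (inW_zero HW iX (s:=t)) ?mulr0 // ti.
Qed.

Lemma tperm_in a b Y i : a \in Y -> b \in Y -> (tperm a b i \in Y) = (i \in Y).
Proof. by move=> aY bY; case: tpermP => [->|->|//]; rewrite ?aY ?bY. Qed.

Lemma marg_swap_inv P Y a b s : (forall t, P (swap_idx a b t) = P t) ->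
  a \in Y -> b \in Y -> marg P Y s = marg P Y (swap_idx a b s).
Proof.
move=> H aY bY; rewrite !margE (reindex_inj (swap_inj (a:=a) (b:=b))) /=.
apply: eq_bigr => t _; rewrite H; congr (_ * _); congr ((nat_of_bool _)%:R).
rewrite /agree; apply/forall_inP/forall_inP => H' i iY;
have := H' (tperm a b i); rewrite tperm_in // => /(_ iY);
by rewrite !swapE tpermK.
Qed.

Definition CIdx := ({set 'I_n} * 'I_n * 'I_n * F)%type.
Definition Phi (X : {set 'I_n}) (C : {set 'I_n} -> 'I_n -> 'I_n -> bool) P :
   {ffun (CIdx + F) -> R^o} :=
  [ffun j : CIdx + F => match j with
   | inl (Y, a, b, s) => if C Y a b then marg P Y s - marg P Y (swap_idx a b s) else 0
   | inr s => if [exists i in ~: X, s i != z] then P s else 0 end].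

Fact Phi_lin X C : linear (Phi X C).
Proof.
move=> a P Q; apply/ffunP => [[[[[Y a'] b] s]|s]]; rewrite !ffunE /=.
  case: ifP => _; last by rewrite scaler0 addr0.
  by rewrite !margD scaleRo; ring.
by case: ifP => _; rewrite ?ffunE // scaler0 addr0.
Qed.
HB.instance Definition _ X C := GRing.isLinear.Build R V _ _ (Phi X C) (Phi_lin X C).

Definition D X C := lker (linfun (Phi X C)).

Lemma memD X C P : reflect (inW X P /\ forall Y a b s, C Y a b ->
    marg P Y s = marg P Y (swap_idx a b s)) (P \in D X C).
Proof.
rewrite memv_ker lfunE /=; apply: (iffP eqP) => [H|[HW HC]].
  split.
    move=> s Hs; have := congr1 (fun f : {ffun (CIdx + F) -> R^o} => f (inr s)) H; rewrite !ffunE Hs //.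
  move=> Y a b s HC; have := congr1 (fun f : {ffun (CIdx + F) -> R^o} => f (inl (Y, a, b, s))) H.
  by rewrite !ffunE /= HC => /eqP; rewrite subr_eq0 => /eqP.
apply/ffunP => [[[[[Y a] b] s]|s]]; rewrite !ffunE /=.
  by case: ifP => // /HC ->; rewrite subrr.
by case: ifP => // /HW.
Qed.


Lemma ins_slice x P : \sum_c ins x c (slice x c P) = P.
Proof.
apply/ffunP => s; rewrite sum_ffunE (bigD1 (s x)) //= [X in _ + X]big1 ?addr0 => [|c cs].
  by rewrite ffunE eqxx ffunE upd_at eqxx upd_upd upd_id.
by rewrite ffunE eq_sym (negbTE cs).
Qed.

Lemma slice_ins x c c' X Q : x \notin X -> inW X Q ->
  slice x c (ins x c' Q) = if c == c' then Q else 0.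
Proof.
move=> xX HW; apply/ffunP => s; rewrite ffunE [X in if _ then X else _]ffunE upd_at.
case: (boolP (s x == z)) => sx.
  by rewrite upd_upd (upd_id (eqP sx)); case: (c == c'); rewrite ?ffunE.
by case: (c == c'); rewrite ?ffunE // (inW_zero HW xX sx).
Qed.

Lemma inW_slice x c X P : inW (x |: X) P -> inW X (slice x c P).
Proof.
move=> HW s /existsP [i /andP [iX si]]; rewrite ffunE; case: ifP => // /eqP sx.
have ix : i != x by apply: contraNneq si => ->; rewrite sx.
apply: (inW_zero HW (i:=i)); first by rewrite !inE negb_or ix; rewrite inE in iX.
by rewrite updE (negbTE ix).
Qed.

Lemma inW_ins x c X Q : inW X Q -> inW (x |: X) (ins x c Q).
Proof.
move=> HW s /existsP [i /andP [iX si]]; rewrite ffunE; case: ifP => // _.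
rewrite !inE negb_or in iX; case/andP: iX => ix iX'.
by apply: (inW_zero HW (i:=i)) => //; rewrite updE (negbTE ix).
Qed.

Lemma inW_sum X (I : finType) (G : I -> V) :
  (forall i, inW X (G i)) -> inW X (\sum_i G i).
Proof. by move=> H s Hs; rewrite sum_ffunE big1 // => i _; apply: H. Qed.

Lemma inW_slices x X P : inW (x |: X) P <-> forall c, inW X (slice x c P).
Proof.
split=> [H c|H]; first exact: inW_slice.
by rewrite -(ins_slice x P); apply: inW_sum => c; apply: inW_ins.
Qed.

Definition Ssum x (A : {vspace V}) := (\sum_(c : 'I_k) (linfun (ins x c)) @: A)%VS.

Lemma memv_ins_img x c (A : {vspace V}) (u : V) : u \in (linfun (ins x c) @: A)%VS ->
  exists2 Q, Q \in A & u = ins x c Q.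
Proof. by case/memv_imgP => Q QA ->; exists Q => //; rewrite lfunE. Qed.

Lemma memS x X (A : {vspace V}) P : (forall Q, Q \in A -> inW X Q) -> x \notin X ->
  (P \in Ssum x A) = [forall c, slice x c P \in A].
Proof.
move=> HA xX; apply/idP/forallP => [/memv_sumP [us Hus ->] c|H].
  rewrite linear_sum (bigD1 c) //= big1 ?addr0 => [|c' cc'].
    by have [Q QA ->] := memv_ins_img (Hus c isT); rewrite (slice_ins _ _ xX (HA Q QA)) eqxx.
  have [Q QA ->] := memv_ins_img (Hus c' isT).
  by rewrite (slice_ins _ _ xX (HA Q QA)) eq_sym (negbTE cc').
rewrite -(ins_slice x P); apply: memv_sumr => c _.
have -> : ins x c (slice x c P) = linfun (ins x c) (slice x c P) by rewrite lfunE.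
exact: memv_img.
Qed.

Lemma dimS x X (A : {vspace V}) : (forall Q, Q \in A -> inW X Q) -> x \notin X ->
  \dim (Ssum x A) = (k * \dim A)%N.
Proof.
move=> HA xX.
have inj c : (A :&: lker (linfun (ins x c)) = 0)%VS.
  apply/eqP; rewrite -subv0; apply/subvP => Q /memv_capP [QA].
  rewrite memv_ker lfunE /= memv0 => /eqP H0.
  by have := slice_ins c c xX (HA Q QA); rewrite eqxx H0 linear0 => <-.
have dx : directv (Ssum x A).
  apply/directv_sum_independent => us Hus Hsum c _.
  have [Q QA Hq] := memv_ins_img (Hus c isT).
  have := congr1 (slice x c) Hsum; rewrite linear_sum linear0 (bigD1 c) //=.
  rewrite [X in _ + X]big1 ?addr0 => [|c' cc'].
    by rewrite Hq (slice_ins _ _ xX (HA Q QA)) eqxx => Q0; rewrite Q0 linear0.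
  have [Q' Q'A ->] := memv_ins_img (Hus c' isT).
  by rewrite (slice_ins _ _ xX (HA Q' Q'A)) eq_sym (negbTE cc').
move/directvP: dx => ->; rewrite /=.
under eq_bigr do rewrite limg_dim_eq ?inj //.
by rewrite sum_nat_const card_ord.
Qed.

Definition zz : F := [ffun => z].
Definition W0 := D set0 (fun _ _ _ => false).

Lemma inW0 P : inW set0 P -> P = P zz *: delta zz.
Proof.
move=> HW; apply/ffunP => s; rewrite !ffunE scaleRo.
case: (s =P zz) => [->|ne]; rewrite ?mulr1 ?mulr0 //.
case: (boolP [exists i, s i != z]) => [/existsP [i si]|].
  by apply: (inW_zero HW (i:=i)); rewrite ?inE.
rewrite negb_exists => /forallP H; case: ne; apply/ffunP => i.
by move: (H i); rewrite negbK ffunE => /eqP.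
Qed.

Lemma dimW0 : \dim W0 = 1%N.
Proof.
have -> : W0 = <[delta zz]>%VS.
  apply/vspaceP => P; apply/memD/vlineP => [[HW _]|[c ->]].
    by exists (P zz); apply: inW0.
  split=> // s /existsP [i /andP [_ si]]; rewrite !ffunE scaleRo.
  case: (s =P zz) => [sz|]; last by rewrite mulr0.
  by rewrite sz ffunE eqxx in si.
rewrite dim_vline; case: eqP => // /(congr1 (fun f : V => f zz)).
by rewrite !ffunE eqxx => /eqP; rewrite oner_eq0.
Qed.

Lemma W0_inW Q : Q \in W0 -> inW set0 Q.
Proof. by case/memD. Qed.


Definition Xt (t : rtree 'I_n) : {set 'I_n} := [set i | i \in leaves t].
Definition Ct (t : rtree 'I_n) (Y : {set 'I_n}) a b := consT (mem Y) t a b.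
Definition Dt (t : rtree 'I_n) := D (Xt t) (Ct t).

Lemma Dt_inW (t : rtree 'I_n) Q : Q \in Dt t -> inW (Xt t) Q.
Proof. by case/memD. Qed.

Lemma setU1_in x Y : x \in Y -> x |: Y = Y.
Proof. by move=> xY; apply/setP => i; rewrite !inE; case: (i =P x) => // ->. Qed.

Lemma slice_route x P Y s : x \in Y ->
  marg P Y s = marg (slice x (s x) P) Y (upd x z s).
Proof.
by move=> xY; rewrite marg_slice xY upd_at eqxx mul1r upd_upd upd_id // setU1_in.
Qed.

Lemma Dt_leaf x : Dt (Leaf x) = Ssum x W0.
Proof.
have eX : Xt (Leaf x) = x |: set0 by apply/setP => i; rewrite !inE orbF.
apply/vspaceP => P; rewrite (memS (X:=set0)) ?inE //; last exact: W0_inW.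
apply/memD/forallP => [[HW _] c|H].
  by apply/memD; split => //; apply: inW_slice; rewrite -eX.
split; first by rewrite eX; apply/inW_slices => c; apply: W0_inW.
by move=> Y a b s; rewrite /Ct consT_leaf.
Qed.

Lemma swap_fix a b r : r a = r b -> swap_idx a b r = r.
Proof.
by move=> H; apply/ffunP => i; rewrite swapE; case: tpermP => [->|->|] //.
Qed.

Definition PT := {p : 'I_k * 'I_k | (p.1 < p.2)%N}.

Lemma card_PT : (#|{: PT}| * 2 = k * k.-1)%N.
Proof.
rewrite card_sig.
have cnt (Pr : pred ('I_k * 'I_k)) : #|Pr| = (\sum_p Pr p)%N.
  by rewrite -sum1_card big_mkcond; apply: eq_bigr => p _; rewrite unfold_in; case: (Pr p).
rewrite cnt /=.
have HB : (\sum_(p : 'I_k * 'I_k) (p.2 < p.1)%N = \sum_(p : 'I_k * 'I_k) (p.1 < p.2)%N)%N.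
  have inj : injective (fun p : 'I_k * 'I_k => (p.2, p.1)) by case=> ? ? [? ?] [-> ->].
  by rewrite [RHS](reindex_inj inj).
have HD : (\sum_(p : 'I_k * 'I_k) (p.1 == p.2) = k)%N.
  have : (\sum_(i < k) \sum_(j < k) (i == j) = k)%N.
    rewrite -[RHS]card_ord -sum1_card; apply: eq_bigr => i _.
    by rewrite (bigD1 i) //= eqxx big1 // => j /negbTE; rewrite eq_sym => ->.
  by rewrite pair_big /=.
have HT : (\sum_(p : 'I_k * 'I_k) ((p.1 < p.2)%N + (p.2 < p.1)%N + (p.1 == p.2)) = k * k)%N.
  rewrite (eq_bigr (fun _ => 1%N)) ?sum_nat_const ?card_prod ?card_ord ?muln1 //.
  by move=> [i j] _ /=; rewrite -val_eqE /=; case: (ltngtP i j).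
move: HT; rewrite !big_split /= HB HD.
have : (k <= k * k)%N by rewrite leq_pmull // (leq_ltn_trans _ (ltn_ord z)).
case: k => [|k'] //=; lia.
Qed.


Lemma agree_pair Y a b u v : Y = [set a; b] -> u a = v a -> u b = v b -> agree Y u v.
Proof.
by move=> -> ua ub; apply/forall_inP => i; rewrite !inE => /orP[] /eqP ->; apply/eqP.
Qed.

Section Step.
Variables (x : 'I_n) (t' : rtree 'I_n) (y0 : 'I_n).
Hypotheses (xt : x \notin leaves t') (ut : uniq (leaves t')) (y0t : y0 \in leaves t').
Local Notation t := (Node (Leaf x) t').
Local Notation X' := (Xt t').

Lemma Xt_node : Xt t = x |: X'.
Proof. by apply/setP => i; rewrite !inE. Qed.

Lemma xX' : x \notin X'.
Proof. by rewrite inE. Qed.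

Lemma neq_x i : i \in leaves t' -> i != x.
Proof. by apply: contraTneq => ->. Qed.

Lemma Ct'_U Y a b : Ct t' (x |: Y) a b = Ct t' Y a b.
Proof.
rewrite /Ct /consT (@restrict_eq_in _ (mem (x |: Y)) (mem Y)) //.
by move=> i it; rewrite !inE (negbTE (neq_x it)).
Qed.

Lemma Ct_node Y a b : Ct t Y a b = Ct t' Y a b || ((x \in Y) &&
  (if restrict (mem Y) t' is Some (Leaf y) then (a != b) && perm_eq [:: x; y] [:: a; b]
   else false)).
Proof. by rewrite /Ct consT_node. Qed.

Lemma Ct'_mem Y a b : Ct t' Y a b -> [/\ a \in Y, b \in Y, a != x & b != x].
Proof.
by case/consT_mem => aY bY /neq_x ax /neq_x bx.
Qed.

Definition pr c d : F := [ffun i => if i == x then c else if i == y0 then d else z].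

Definition Fx P : {ffun PT -> R^o} :=
  [ffun p : PT => marg P [set x; y0] (pr (val p).1 (val p).2)
                - marg P [set x; y0] (pr (val p).2 (val p).1)].

Fact Fx_lin : linear Fx.
Proof.
move=> w P Q; apply/ffunP => p; rewrite !ffunE !margD scaleRo; ring.
Qed.
HB.instance Definition _ := GRing.isLinear.Build R V _ _ Fx Fx_lin.

Lemma y0x : y0 != x. Proof. exact: neq_x. Qed.

Lemma pr_swap c d : pr d c = swap_idx x y0 (pr c d).
Proof.
apply/ffunP => i; rewrite swapE !ffunE.
case: (tpermP x y0 i) => [->|->|/eqP ix /eqP iy].
- by rewrite eqxx (negbTE y0x) eqxx.
- by rewrite eqxx (negbTE y0x) eqxx.
- by rewrite (negbTE ix) (negbTE iy).
Qed.

Lemma filter_one Y y : y \in leaves t' -> {in leaves t', forall i, (i \in Y) = (i == y)} ->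
  filter (mem Y) (leaves t') = [:: y].
Proof.
move=> yt H; rewrite -(filter_pred1_uniq ut yt); apply: eq_in_filter => i it.
by rewrite /= H.
Qed.

Lemma Ct_x_y0 : Ct t [set x; y0] x y0.
Proof.
rewrite Ct_node !inE eqxx /= (@restrict_one _ _ _ y0); last first.
  by apply: filter_one => // i it; rewrite !inE (negbTE (neq_x it)).
by rewrite (eq_sym x y0) y0x perm_refl orbT.
Qed.

Lemma slices_of_Dt P : P \in Dt t -> [forall c, slice x c P \in Dt t'].
Proof.
case/memD => HW HC; apply/forallP => c; apply/memD; split.
  by apply: inW_slice; rewrite -Xt_node.
move=> Y a b s H; case/Ct'_mem: (H) => aY bY ax bx.
rewrite !marg_slice swap_x // upd_swap //; congr (_ * _); apply: HC.
by rewrite Ct_node Ct'_U H.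
Qed.

Lemma Fx_of_Dt P : P \in Dt t -> Fx P = 0.
Proof.
case/memD => HW HC; apply/ffunP => p; rewrite !ffunE pr_swap.
by rewrite -HC ?subrr //; apply: Ct_x_y0.
Qed.


Lemma pr_x c d : pr c d x = c. Proof. by rewrite ffunE eqxx. Qed.
Lemma pr_y0 c d : pr c d y0 = d. Proof. by rewrite ffunE (negbTE y0x) eqxx. Qed.

Lemma single_Q Q y u v : Q \in Dt t' -> y \in leaves t' -> u y = v y0 ->
  marg Q [set y] u = marg Q [set y0] v.
Proof.
move=> HQ yt uv; case: (y =P y0) => [E|/eqP yy0].
  subst y; apply: marg_agree; apply/forall_inP => i; rewrite inE => /eqP ->.
  by rewrite uv.
case/memD: HQ => HW HC.
have Cp : Ct t' [set y; y0] y y0.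
  apply: restrict_pair => //; apply: uniq_perm; rewrite ?filter_uniq //=.
    by rewrite inE yy0.
  move=> i; rewrite mem_filter !inE.
  by apply/idP/idP => [/andP[]//|H]; rewrite H /=; case/orP: H => /eqP ->.
rewrite (marg_sum_upd Q u (x:=y0) (Y:=[set y])); last by rewrite inE eq_sym.
rewrite (marg_sum_upd Q v (x:=y) (Y:=[set y0])); last by rewrite inE.
apply: eq_bigr => e _.
have E1 : y0 |: [set y] = [set y; y0] by rewrite setUC.
rewrite E1 (HC _ _ _ _ Cp); apply: marg_agree; apply: agree_pair => //.
  by rewrite swapE tpermL !upd_at.
by rewrite swapE tpermR !updE (negbTE yy0) (eq_sym y0 y) (negbTE yy0).
Qed.

Lemma Qlem Q y v1 v2 : Q \in Dt t' -> y \in leaves t' -> v1 x = z -> v2 x = z ->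
  v1 y = v2 y0 -> marg Q [set x; y] v1 = marg Q [set x; y0] v2.
Proof.
move=> HQ yt v1x v2x vy; have HW := Dt_inW HQ.
have SE w : w \in leaves t' -> [set x; w] :&: X' = [set w] :&: X'.
  move=> wt; apply/setP => i; rewrite !inE.
  by case: (i =P x) => [->|_] //=; rewrite (negbTE xt) !andbF.
rewrite (marg_W (Y' := [set y]) HW (SE y yt)); last first.
  by move=> i; rewrite !inE => /orP[/orP[]|] /eqP -> //; rewrite ?inE yt.
rewrite [RHS](marg_W (Y' := [set y0]) HW (SE y0 y0t)); last first.
  by move=> i; rewrite !inE => /orP[/orP[]|] /eqP -> //; rewrite ?inE y0t.
exact: single_Q.
Qed.

Lemma margM P y u : (forall c, slice x c P \in Dt t') -> y \in leaves t' ->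
  marg P [set x; y] u = marg P [set x; y0] (pr (u x) (u y)).
Proof.
move=> HS yt.
rewrite (slice_route P u (x:=x)) ?inE ?eqxx // (slice_route P (pr _ _) (x:=x)) ?inE ?eqxx //.
rewrite pr_x; apply: Qlem => //; rewrite ?upd_at //.
by rewrite !updE (negbTE (neq_x yt)) (negbTE y0x) pr_y0.
Qed.

Lemma Dt_of_slices P : [forall c, slice x c P \in Dt t'] -> Fx P = 0 -> P \in Dt t.
Proof.
move=> /forallP HS HF.
have HW : inW (Xt t) P.
  by rewrite Xt_node; apply/inW_slices => c; exact: Dt_inW (HS c).
apply/memD; split => // Y a b s; rewrite Ct_node => /orP [H|].
  case/Ct'_mem: (H) => aY bY ax bx.
  case: (boolP (x \in Y)) => xY.
    rewrite (slice_route P s (x:=x)) // (slice_route P (swap_idx a b s) (x:=x)) //.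
    rewrite swap_x // upd_swap //.
    by case/memD: (HS (s x)) => _ HC'; apply: HC'.
  rewrite (marg_sum_upd P s xY) (marg_sum_upd P (swap_idx a b s) xY).
  apply: eq_bigr => c _.
  have E u : marg P (x |: Y) (upd x c u) = marg (slice x c P) Y u.
    by rewrite marg_slice (negbTE xY) mul1r.
  by rewrite !E; case/memD: (HS c) => _ HC'; apply: HC'.
case/andP => xY; case E: (restrict (mem Y) t') => [[y|l r]|] //.
case/andP => ab pe.
have Hf : [:: y] = filter (mem Y) (leaves t') by have := restrict_leaves (mem Y) t'; rewrite E.
have yt : y \in leaves t'.
  by have := mem_head y [::]; rewrite Hf mem_filter => /andP[].
have yx : y != x := neq_x yt.
have xXt : x \in Xt t by rewrite Xt_node setU11.
have yXt : y \in Xt t by rewrite Xt_node !inE yt orbT.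
have sym c d : marg P [set x; y0] (pr c d) = marg P [set x; y0] (pr d c).
  case: (ltngtP c d) => [cd|dc|/val_inj -> //].
    have := congr1 (fun f : {ffun PT -> R^o} => f (exist _ (c, d) cd)) HF.
    by rewrite !ffunE /= => /eqP; rewrite subr_eq0 => /eqP.
  have := congr1 (fun f : {ffun PT -> R^o} => f (exist _ (d, c) dc)) HF.
  by rewrite !ffunE /= => /eqP; rewrite subr_eq0 => /eqP.
have key : marg P Y s = marg P Y (swap_idx x y s).
  case: (boolP [exists i in Y, (i \notin Xt t) && (s i != z)]).
    case/exists_inP => i iY /andP [iX si].
    have ix : i != x by apply: contraNneq iX => ->.
    have iy : i != y by apply: contraNneq iX => ->.
    rewrite (marg_W0 HW iY iX si) (marg_W0 HW iY iX) // swapE tpermD //.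
      by rewrite eq_sym.
    by rewrite eq_sym.
  rewrite negb_exists_in => /forall_inP Hz.
  have YX : Y :&: Xt t = [set x; y] :&: Xt t.
    apply/setP => i; rewrite Xt_node !inE.
    case: (i =P x) => [->|ix] /=; first by rewrite xY.
    have := congr1 (fun l => i \in l) Hf; rewrite mem_filter inE /= => <-.
    by case: (i =P y) => [->|] //=; rewrite andbF.
  have Hs u : (forall i, i \in Y -> i \notin Xt t -> u i = z) ->
      marg P Y u = marg P [set x; y] u.
    move=> Hu; apply: (marg_W HW YX) => i; rewrite inE => /orP [iY|] iX.
      exact: Hu.
    by case/set2P: iX => ->; rewrite ?xXt ?yXt.
  have Hz' i : i \in Y -> i \notin Xt t -> s i = z.
    by move=> iY iX; have := Hz i iY; rewrite iX /= negbK => /eqP.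
  rewrite !Hs //; last first.
    move=> i iY iX; rewrite swapE tpermD ?Hz' //.
      by apply: contraNneq iX => <-.
    by apply: contraNneq iX => <-.
  by rewrite (margM s HS yt) (margM (swap_idx x y s) HS yt) swapE tpermL swapE tpermR sym.
have ha : a \in [:: x; y] by rewrite (perm_mem pe) mem_head.
have hb : b \in [:: x; y] by rewrite (perm_mem pe) !inE eqxx orbT.
rewrite !inE in ha hb.
case/orP: ha => /eqP ea; case/orP: hb => /eqP eb; subst a b.
- by rewrite eqxx in ab.
- exact: key.
- have -> : swap_idx y x s = swap_idx x y s by apply/ffunP => i; rewrite !swapE tpermC.
  exact: key.
- by rewrite eqxx in ab.
Qed.



Lemma Dt_step : Dt t = (Ssum x (Dt t') :&: lker (linfun Fx))%VS.
Proof.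
apply/vspaceP => P; rewrite memv_cap (memS _ (fun Q HQ => Dt_inW HQ) xX') memv_ker lfunE /=.
apply/idP/andP => [HP|[HS /eqP HF]]; last exact: Dt_of_slices.
by split; [exact: slices_of_Dt | apply/eqP; exact: Fx_of_Dt].
Qed.

Definition rho c e : F := [ffun i => if i == x then c else if i \in leaves t' then e else z].
Definition gl (g : {ffun PT -> R^o}) c e : R := if insub (c, e) is Some p then g p else 0.
Definition Pg g : V := \sum_c \sum_e gl g c e *: delta (rho c e).

Lemma delta_rho_slice c' c e : slice x c' (delta (rho c e)) \in Dt t'.
Proof.
apply/memD; split.
  apply: inW_slice; rewrite -Xt_node => s /existsP [i /andP [iX si]].
  rewrite ffunE; case: (s =P rho c e) => [E|] //.
  rewrite Xt_node !inE negb_or in iX; case/andP: iX => ix it.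
  by rewrite E ffunE (negbTE ix) (negbTE it) eqxx in si.
move=> Y a b s H; case/consT_mem: (H) => aY bY hat hbt.
have Hd u : delta (rho c e) (swap_idx a b u) = delta (rho c e) u.
  have Hr : swap_idx a b (rho c e) = rho c e.
    by apply: swap_fix; rewrite !ffunE (negbTE (neq_x hat)) (negbTE (neq_x hbt)) hat hbt.
  by rewrite !ffunE -{1}Hr (inj_eq (@swap_inj a b)).
apply: marg_swap_inv => // u.
by rewrite /slice ffunE [in RHS]ffunE swap_x ?neq_x // upd_swap ?neq_x // Hd.
Qed.

Lemma agree_rho c e c0 d0 : agree [set x; y0] (rho c e) (pr c0 d0) = (c == c0) && (e == d0).
Proof.
apply/idP/andP => [/forall_inP H|[/eqP-> /eqP->]].
  have := H x; rewrite !inE eqxx /= => /(_ isT); rewrite pr_x ffunE eqxx => ->.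
  have := H y0; rewrite !inE eqxx orbT => /(_ isT); rewrite pr_y0 ffunE (negbTE y0x) y0t.
  by [].
by apply: agree_pair => //; rewrite ?pr_x ?pr_y0 ffunE ?eqxx // (negbTE y0x) y0t.
Qed.

Lemma Fx_Pg g : Fx (Pg g) = g.
Proof.
have M c0 d0 : marg (Pg g) [set x; y0] (pr c0 d0) = gl g c0 d0.
  rewrite /Pg marg_sum (bigD1 c0) //= [X in _ + X]big1 ?addr0 => [|c cc0].
    rewrite marg_sum (bigD1 d0) //= [X in _ + X]big1 ?addr0 => [|e ed0].
      by rewrite margZ marg_delta agree_rho !eqxx mulr1.
    by rewrite margZ marg_delta agree_rho eqxx (negbTE ed0) mulr0.
  rewrite marg_sum big1 // => e _.
  by rewrite margZ marg_delta agree_rho (negbTE cc0) mulr0.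
apply/ffunP => p; rewrite ffunE !M; case: p => [[c d] cd] /=.
rewrite /gl (insubT (fun p : 'I_k * 'I_k => (p.1 < p.2)%N) cd) insubF ?subr0 //=.
by rewrite ltnNge ltnW.
Qed.

Lemma Fx_img : (linfun Fx @: Ssum x (Dt t'))%VS = fullv.
Proof.
apply/eqP; rewrite eqEsubv subvf /=; apply/subvP => g _.
have -> : g = linfun Fx (Pg g) by rewrite lfunE /= Fx_Pg.
apply: memv_img; rewrite (memS _ (fun Q HQ => Dt_inW HQ) xX'); apply/forallP => c'.
rewrite /Pg linear_sum; apply: rpred_sum => c _; rewrite linear_sum.
apply: rpred_sum => e _; rewrite linearZ; apply: rpredZ; exact: delta_rho_slice.
Qed.

Lemma dim_step : (\dim (Dt t) + #|{: PT}| = k * \dim (Dt t'))%N.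
Proof.
rewrite Dt_step -(dimS (fun Q HQ => Dt_inW HQ) xX').
by rewrite -(limg_ker_dim (linfun Fx) (Ssum x (Dt t'))) Fx_img dimffun.
Qed.

End Step.


Lemma Dt_swap (l r : rtree 'I_n) : Dt (Node l r) = Dt (Node r l).
Proof.
have XE : Xt (Node l r) = Xt (Node r l) by apply/setP => i; rewrite !inE !mem_cat orbC.
apply/vspaceP => P; apply/memD/memD => [][HW HC]; split; rewrite ?XE //; rewrite -?XE //;
by move=> Y a b s H; apply: HC; rewrite /Ct consT_swap.
Qed.

Lemma kpos : (0 < k)%N.
Proof. by apply: leq_ltn_trans (ltn_ord z). Qed.

Lemma step_dim x (t' : rtree 'I_n) : x \notin leaves t' -> uniq (leaves t') ->
  (\dim (Dt t') * 2 = k ^ size (leaves t') + k)%N ->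
  (\dim (Dt (Node (Leaf x) t')) * 2 = k ^ size (leaves (Node (Leaf x) t')) + k)%N.
Proof.
move=> xt ut IH.
have [y0 y0t] : exists y0, y0 \in leaves t'.
  by have := size_leaves t'; case: (leaves t') => // a ? _; exists a; rewrite mem_head.
have H := dim_step xt ut y0t; have HP := card_PT; have kp := kpos.
rewrite /= expnS.
move: IH H HP; set K := (k ^ size (leaves t'))%N; set d' := \dim (Dt t'); set d := \dim _; set p := #|_|.
move=> IH H HP.
have E1 : (d * 2 + p * 2 = k * (K + k))%N by rewrite -mulnDl H -IH mulnA.
have E2 : (k * k.-1 + k = k * k)%N by case: (k) kp => // k' _; rewrite mulnS /=; lia.
rewrite mulnDr in E1; nia.
Qed.

Lemma dimDt (t : rtree 'I_n) : caterpillar t -> uniq (leaves t) ->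
  (\dim (Dt t) * 2 = k ^ size (leaves t) + k)%N.
Proof.
elim: t => [x|l IHl r IHr] /=.
  move=> _ _; rewrite Dt_leaf (dimS (X:=set0) (fun Q HQ => W0_inW HQ)) ?inE // dimW0.
  by rewrite muln1 expn1; lia.
case/andP => /andP [lr cl] cr; rewrite cat_uniq => /and3P [ul dis ur].
case: l IHl lr cl ul dis => [x|l1 l2] IHl lr cl ul dis.
  apply: step_dim => //; last exact: IHr.
  by apply/negP => xr; move/negP: dis; apply; apply/hasP; exists x; rewrite ?inE.
case: r IHr lr cr ur dis => [x|r1 r2] // IHr lr cr ur dis.
rewrite Dt_swap.
have -> : size (leaves (Node (Node l1 l2) (Leaf x))) = size (leaves (Node (Leaf x) (Node l1 l2))).
  by rewrite /= size_cat addnC.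
apply: step_dim => //; last exact: IHl.
by apply/negP => xr; move/negP: dis; apply; apply/hasP; exists x; rewrite ?inE.
Qed.

End Tensors.

Section Final.
Variables (R : realType) (n k : nat).
Local Notation V := (tensor R n k).

Definition sumf (P : V) : R^o := \sum_s P s.
Fact sumf_lin : linear sumf.
Proof.
move=> w P Q; rewrite /sumf scaler_sumr -big_split /=; apply: eq_bigr => s _.
by rewrite !ffunE.
Qed.
HB.instance Definition _ := GRing.isLinear.Build R V R^o _ sumf sumf_lin.

Variables (z : 'I_k) (t : rtree 'I_n).
Hypothesis tt : tree_on t.

Lemma XT : Xt t = setT.
Proof. by apply/setP => i; rewrite !inE (perm_mem tt) mem_enum. Qed.

Lemma UE_iff (P : V) : UE_set t P <-> (sumf P = 1 /\ P \in Dt R z t).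
Proof.
split => [[H1 H2]|[H1 /memD [HW HC]]].
  split => //; apply/memD; split.
    by move=> s /existsP [i /andP [iX _]]; rewrite XT !inE in iX.
  move=> Y a b s; rewrite /Ct /consT; case E: (restrict _ t) => [t'|] // H.
  exact: (H2 Y t' a b E H s).
split => // Y t' a b E H s; apply: HC; by rewrite /Ct /consT E.
Qed.

Lemma P0_in : delta R (zz n z) \in Dt R z t.
Proof.
apply/memD; split.
  by move=> s /existsP [i /andP [iX _]]; rewrite XT !inE in iX.
move=> Y a b s /consT_mem [aY bY _ _]; apply: marg_swap_inv => // u.
have Hr : swap_idx a b (zz n z) = zz n z by apply: swap_fix; rewrite !ffunE.
by rewrite !ffunE -{1}Hr (inj_eq (@swap_inj _ _ a b)).
Qed.

Lemma P0_sum : sumf (delta R (zz n z)) = 1.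
Proof.
rewrite /sumf (bigD1 (zz n z)) //= big1 ?addr0 ?ffunE ?eqxx // => s sz.
by rewrite ffunE (negbTE sz).
Qed.

End Final.

Unset Implicit Arguments.

Theorem corollary4p3 (R : realType) (k n : nat) (t : rtree 'I_n) :
  (2 <= k)%N -> (1 <= n)%N -> tree_on t -> caterpillar t ->
  affine_dim (@UE_set R n k t) (((k ^ n + k) %/ 2) - 1)%N.
Proof.
move=> k2 n1 tt cat.
have kpos : (0 < k)%N by apply: leq_trans k2.
pose z : 'I_k := Ordinal kpos.
have ut : uniq (leaves t) by rewrite (perm_uniq tt) enum_uniq.
have sz : size (leaves t) = n by rewrite (perm_size tt) size_enum_ord.
have dD := dimDt R z cat ut; rewrite sz in dD.
pose D := Dt R z t.
pose P0 := delta R (zz n z).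
have HP0 : UE_set t P0 by apply/(UE_iff z tt); split; [exact: P0_sum | exact: P0_in].
split; first by exists P0.
exists (D :&: lker (linfun (@sumf R n k)))%VS; split.
- have := limg_ker_dim (linfun (@sumf R n k)) D.
  have -> : \dim (linfun (@sumf R n k) @: D) = 1%N.
    apply/eqP; rewrite eqn_leq; apply/andP; split.
      by rewrite -(dimR R); apply: dimvS; apply: subvf.
    rewrite lt0n dimv_eq0; apply/negP => /eqP H0.
    have : linfun (@sumf R n k) P0 \in (linfun (@sumf R n k) @: D)%VS.
      by apply: memv_img; exact: P0_in.
    by rewrite H0 memv0 lfunE /= P0_sum oner_eq0.
  by move=> H; rewrite -dD mulnK // -[Dt R z t]/D -H addnK.
- move=> P Q HP HQ; have [HP1 HP2] := (UE_iff z tt P).1 HP; have [HQ1 HQ2] := (UE_iff z tt Q).1 HQ.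
  rewrite memv_cap memvB //= memv_ker lfunE /= linearB /= HP1 HQ1 subrr.
  by [].
- move=> W HW; apply/subvP => u /memv_capP [uD]; rewrite memv_ker lfunE /= => /eqP u0.
  have H1 : UE_set t (u + P0).
    apply/(UE_iff z tt); split; last by rewrite memvD //; exact: P0_in.
    by rewrite linearD /= u0 add0r P0_sum.
  by have := HW _ _ H1 HP0; rewrite addrK.
Qed.
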